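(* Let $d\in\mathbb{N}$ and suppose that $\mu_s(T_n)=\frac{s}{2}$ holds for every $n\le d$ and every $s\in\{1,\dots,n\}$. Then for every terminal $d$-polytope $T\subseteq\mathbb{R}^d$ and every $i\in\{1,\dots,d\}$, $\mu_i(T)=\frac{i}{2}$.
   Context: All covering minima are with respect to the integer lattice: for a convex body $K\subseteq\mathbb{R}^n$ and $i\in\{1,\dots,n\}$, $\mu_i(K)=\min\{\mu\ge0:(\mu K+\mathbb{Z}^n)\cap U\ne\emptyset$ for every $(n-i)$-dimensional affine subspace $U\subseteq\mathbb{R}^n\}$; covering minima are invariant under translations by $\mathbb{R}^n$. The standard terminal simplex is $T_n=\operatorname{conv}(-\mathbb{1}_n,e_1,\dots,e_n)\subseteq\mathbb{R}^n$. For sets $K\subseteq V$, $L\subseteq W$ containing the origin, with $\mathbb{R}^d=V\oplus W$, the direct sum is $K\oplus L=\{\lambda x+(1-\lambda)y:x\in K,y\in L,\lambda\in[0,1]\}$. A terminal $d$-polytope is a full-dimensional lattice polytope of the form $(u_1+T_{l_1})\oplus\cdots\oplus(u_k+T_{l_k})$ with respect to the coordinate decomposition $\mathbb{R}^d=\mathbb{R}^{l_1}\oplus\cdots\oplus\mathbb{R}^{l_k}$, $l_1+\dots+l_k=d$, where each translate $u_j+T_{l_j}$ ($u_j\in\mathbb{Z}^{l_j}$) contains the origin. *)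

(* Defs.v *)
From HB Require Import structures.
From mathcomp Require Import all_boot all_order all_algebra.
From mathcomp Require Import reals.
Unset Printing Implicit Defensive.
Import Order.TTheory GRing.Theory Num.Theory.
Local Open Scope ring_scope.

Section Defs.
Variable R : realType.

Definition conv {m n : nat} (v : 'I_m -> 'rV[R]_n) : 'rV[R]_n -> Prop :=
  fun x => exists l : 'I_m -> R,
    (forall j, 0 <= l j) /\ \sum_j l j = 1 /\ x = \sum_j l j *: v j.

(* vertices of the standard terminal simplex T_n:
   vertex 0 is -1_n, vertex j (1 <= j <= n) is e_j *)
Definition simplex_vert (n : nat) (j : 'I_n.+1) : 'rV[R]_n :=
  \row_(k < n) (if (j == 0 :> nat) then -1 else ((k.+1 == j :> nat)%:R)).

Definition terminal_simplex (n : nat) : 'rV[R]_n -> Prop :=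
  conv (simplex_vert n).

Definition int_vec {n : nat} (z : 'rV[int]_n) : 'rV[R]_n := map_mx intr z.

Definition dilate_plus_lattice {n : nat} (mu : R) (K : 'rV[R]_n -> Prop)
  : 'rV[R]_n -> Prop :=
  fun x => exists k z, K k /\ x = mu *: k + int_vec z.

(* U is a (dimension m) affine subspace of R^n:  U = p + rowspace B with
   B an m x n matrix of rank m *)
Definition affine_subspace {n m : nat} (p : 'rV[R]_n) (B : 'M[R]_(m, n))
  : 'rV[R]_n -> Prop := fun x => (x - p <= B)%MS.

Definition covers {n : nat} (K : 'rV[R]_n -> Prop) (i : nat) (mu : R) : Prop :=
  forall (p : 'rV[R]_n) (B : 'M[R]_(n - i, n)), \rank B = (n - i)%N ->
    exists x, affine_subspace p B x /\ dilate_plus_lattice mu K x.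

Definition is_covering_minimum {n : nat} (K : 'rV[R]_n -> Prop) (i : nat) (m : R)
  : Prop :=
  0 <= m /\ covers K i m /\ (forall mu, 0 <= mu -> covers K i mu -> m <= mu).

(* Coordinate decomposition R^d = R^{l_1} + ... + R^{l_k}, ls = [l_1;...;l_k],
   block j (0-based) occupies coordinates off j, ..., off j + l_(j+1) - 1. *)
Definition blk_off (ls : seq nat) (j : nat) : nat := sumn (take j ls).
Definition blk_len (ls : seq nat) (j : nat) : nat := nth 0%N ls j.
Definition in_blk (ls : seq nat) (j c : nat) : bool :=
  (blk_off ls j <= c < blk_off ls j + blk_len ls j)%N.

(* vertices of T_{l_j} embedded in block j of R^d *)
Definition blk_vert (d : nat) (ls : seq nat) (j : nat)
  (t : 'I_(blk_len ls j).+1) : 'rV[R]_d :=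
  \row_(c < d) (if (t == 0 :> nat) then (if in_blk ls j c then -1 else 0)
                else ((c == blk_off ls j + t.-1 :> nat)%N)%:R).

(* u_j embedded in block j, where u_j is the block-j part of U in Z^d *)
Definition blk_transl (d : nat) (ls : seq nat) (U : 'rV[int]_d) (j : nat)
  : 'rV[R]_d :=
  \row_(c < d) (if in_blk ls j c then (U 0 c)%:~R else 0).

Definition blk_piece (d : nat) (ls : seq nat) (U : 'rV[int]_d) (j : nat)
  : 'rV[R]_d -> Prop :=
  fun x => exists y, conv (blk_vert d ls j) y /\ x = blk_transl d ls U j + y.

(* direct sum P_0 (+) ... (+) P_(k-1) of sets in complementary coordinate
   subspaces (n-ary version of {lam x + (1-lam) y}) *)
Definition direct_sum {d : nat} (k : nat) (P : nat -> 'rV[R]_d -> Prop)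
  : 'rV[R]_d -> Prop :=
  fun x => exists (l : 'I_k -> R) (y : 'I_k -> 'rV[R]_d),
    (forall j, 0 <= l j) /\ \sum_j l j = 1 /\ (forall j : 'I_k, P j (y j)) /\
    x = \sum_j l j *: y j.

Definition terminal_polytope (d : nat) (T : 'rV[R]_d -> Prop) : Prop :=
  exists (ls : seq nat) (U : 'rV[int]_d),
    all (fun l => 0 < l)%N ls /\ sumn ls = d /\
    (forall j, (j < size ls)%N -> blk_piece d ls U j 0) /\
    (forall x, T x <-> direct_sum (size ls) (blk_piece d ls U) x).

End Defs.

(* Main.v *)
Require Import Defs.
From HB Require Import structures.
From mathcomp Require Import all_boot all_order all_algebra.
From mathcomp Require Import reals.
From mathcomp Require Import zify lra ring.
From Stdlib Require Import Classical.
Import Order.TTheory GRing.Theory Num.Theory.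
Local Open Scope ring_scope.

Definition Prm (T : pzRingType) (d o l : nat) : 'M[T]_(d,l) :=
  \matrix_(i < d, k < l) ((i == o + k :> nat)%:R).
Definition Emm (T : pzRingType) (d o l : nat) : 'M[T]_(l,d) :=
  \matrix_(k < l, j < d) ((j == o + k :> nat)%:R).

Section Mat.
Variable R : realType.
Variable d : nat.

Definition Pr o l := Prm R d o l.
Definition Em o l := Emm R d o l.
Definition Pi o l : 'M[R]_d := Pr o l *m Em o l.

Lemma sum_ind1 n (G : 'I_n -> R) N (i0 : 'I_n) :
  val i0 = N -> \sum_i G i * ((i == N :> nat)%:R) = G i0.
Proof.
move=> H; rewrite (bigD1 i0) //= H eqxx mulr1 big1 ?addr0 // => i ne.
by rewrite -H val_eqE (negbTE ne) mulr0.
Qed.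

Lemma EmPr o l : (o + l <= d)%N -> Em o l *m Pr o l = 1%:M.
Proof.
move=> H; apply/matrixP => k k'; rewrite /Em /Pr !mxE.
have hk : (o + k' < d)%N by have := ltn_ord k'; lia.
under eq_bigr do rewrite !mxE.
have := @sum_ind1 _ (fun i : 'I_d => (i == o + k :> nat)%:R) (o + k') (Ordinal hk) erefl.
rewrite /= => ->.
by rewrite eqn_add2l eq_sym.
Qed.

Lemma Pi_idem o l : (o + l <= d)%N -> Pi o l *m Pi o l = Pi o l.
Proof. by move=> H; rewrite /Pi mulmxA -(mulmxA (Pr o l)) EmPr // mulmx1. Qed.

Lemma Em_Pr0 a l1 l2 : Em a l1 *m Pr (a + l1) l2 = 0.
Proof.
apply/matrixP => k k'; rewrite /Em /Pr !mxE big1 // => i _; rewrite !mxE.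
have hk := ltn_ord k; case: eqP => [->|_]; last by rewrite mul0r.
case: eqP => [h|_]; [lia | by rewrite mulr0].
Qed.

Lemma Em_Pr0' a l1 l2 : Em (a + l1) l2 *m Pr a l1 = 0.
Proof.
apply/matrixP => k k'; rewrite /Em /Pr !mxE big1 // => i _; rewrite !mxE.
have hk := ltn_ord k'; case: eqP => [->|_]; last by rewrite mul0r.
case: eqP => [h|_]; [lia | by rewrite mulr0].
Qed.

Lemma Pi_orth a l1 l2 : Pi a l1 *m Pi (a + l1) l2 = 0.
Proof. by rewrite /Pi mulmxA -(mulmxA (Pr a l1)) Em_Pr0 mulmx0 mul0mx. Qed.
Lemma Pi_orth' a l1 l2 : Pi (a + l1) l2 *m Pi a l1 = 0.
Proof. by rewrite /Pi mulmxA -(mulmxA (Pr _ l2)) Em_Pr0' mulmx0 mul0mx. Qed.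

Lemma Pr_split a l1 l2 : Pr a (l1 + l2) = row_mx (Pr a l1) (Pr (a + l1) l2).
Proof.
rewrite /Pr; apply/matrixP => i k; rewrite -(splitK k); case: (split k) => k' /=.
  by rewrite row_mxEl !mxE.
rewrite row_mxEr !mxE /=; congr ((_ == _)%:R); lia.
Qed.

Lemma Em_split a l1 l2 : Em a (l1 + l2) = col_mx (Em a l1) (Em (a + l1) l2).
Proof.
rewrite /Em; apply/matrixP => k j; rewrite -(splitK k); case: (split k) => k' /=.
  by rewrite col_mxEu !mxE.
rewrite col_mxEd !mxE /=; congr ((_ == _)%:R); lia.
Qed.

Lemma Pi_split a l1 l2 : Pi a (l1 + l2) = Pi a l1 + Pi (a + l1) l2.
Proof. by rewrite /Pi Pr_split Em_split mul_row_col. Qed.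

Lemma Pi_full : Pi 0 d = 1%:M.
Proof.
rewrite /Pi.
have -> : Pr 0 d = 1%:M by rewrite /Pr; apply/matrixP => i k; rewrite !mxE.
have -> : Em 0 d = 1%:M by rewrite /Em; apply/matrixP => i k; rewrite !mxE eq_sym.
by rewrite mulmx1.
Qed.

Lemma rank_Pr o l : (o + l <= d)%N -> \rank (Pr o l) = l.
Proof.
move=> H; apply/eqP; rewrite eqn_leq rank_leq_col /=.
by rewrite -{1}(mxrank1 R l) -(EmPr _ _ H) mxrankM_maxr.
Qed.

Lemma rank_Pi o l : (o + l <= d)%N -> \rank (Pi o l) = l.
Proof.
move=> H; apply/eqP; rewrite eqn_leq.
rewrite (leq_trans (mxrankM_maxl _ _)) ?rank_Pr //=.
rewrite -{1}(rank_Pr _ _ H) -{1}(mulmx1 (Pr o l)) -(EmPr _ _ H) mulmxA.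
exact: mxrankM_maxl.
Qed.

Definition intMx (P : 'M[R]_d) := forall z : 'rV[int]_d, exists z', int_vec R z *m P = int_vec R z'.

Lemma int_vecM n m (z : 'rV[int]_n) (M : 'M[int]_(n,m)) :
  int_vec R z *m map_mx intr M = int_vec R (z *m M).
Proof. by rewrite /int_vec map_mxM. Qed.

Lemma map_Prm o l : map_mx intr (Prm int d o l) = Pr o l.
Proof. by rewrite /Pr; apply/matrixP => i k; rewrite !mxE; case: eqP. Qed.
Lemma map_Emm o l : map_mx intr (Emm int d o l) = Em o l.
Proof. by rewrite /Em; apply/matrixP => i k; rewrite !mxE; case: eqP. Qed.

Lemma int_Pr o l (z : 'rV[int]_d) : int_vec R z *m Pr o l = int_vec R (z *m Prm int d o l).
Proof. by rewrite -map_Prm int_vecM. Qed.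
Lemma int_Em o l (z : 'rV[int]_l) : int_vec R z *m Em o l = int_vec R (z *m Emm int d o l).
Proof. by rewrite -map_Emm int_vecM. Qed.

Lemma intP_Pi o l : intMx (Pi o l).
Proof. by move=> z; rewrite /Pi mulmxA int_Pr int_Em; eexists. Qed.

End Mat.
Arguments Pi {R d}. Arguments Pr {R d}. Arguments Em {R d}. Arguments intMx {R d}.

Section Comb.
Variable R : realType.
Variable d : nat.
Local Notation vec := 'rV[R]_d.

Definition DS (K1 K2 : vec -> Prop) : vec -> Prop := fun x =>
  exists lam y1 y2, 0 <= lam <= 1 /\ K1 y1 /\ K2 y2 /\ x = lam *: y1 + (1 - lam) *: y2.

Definition RCov (P : 'M[R]_d) (n : nat) (K : vec -> Prop) (i : nat) (mu : R) :=
  forall m (V : 'M[R]_(m,d)) (p : vec), V *m P = V -> p *m P = p ->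
  \rank V = (n - i)%N ->
  exists k z, K k /\ (mu *: k + int_vec R z - p <= V)%MS.

Definition Avoid (P : 'M[R]_d) (n : nat) (K : vec -> Prop) (s : nat) (mu : R) :=
  exists m (V : 'M[R]_(m,d)) (p : vec), V *m P = V /\ p *m P = p /\
  \rank V = (n - s)%N /\
  forall mu' k z, 0 <= mu' <= mu -> K k -> ~ (mu' *: k + int_vec R z - p <= V)%MS.

Definition Good (P : 'M[R]_d) (n : nat) (K : vec -> Prop) :=
  (forall k, K k -> k *m P = k) /\ (exists k, K k) /\
  (forall i, (i <= n)%N -> RCov P n K i (i%:R / 2)) /\
  (forall s mu, (s <= n)%N -> 0 <= mu -> mu < s%:R / 2 -> Avoid P n K s mu).

Lemma Good_ext P n K K' : (forall x, K x <-> K' x) -> Good P n K -> Good P n K'.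
Proof.
move=> e [h1 [[k0 hk0] [h3 h4]]]; split; [|split; [|split]].
- by move=> k /e /h1.
- by exists k0; apply/e.
- move=> i hi m V p hV hp hr; have [k [z [hk hx]]] := h3 i hi m V p hV hp hr.
  by exists k, z; split=> //; apply/e.
- move=> s mu hs h0 hl; have [m [V [p [hV [hp [hr ha]]]]]] := h4 s mu hs h0 hl.
  exists m, V, p; do 3 split => //; move=> mu' k z hm /e; exact: ha.
Qed.

Lemma block_avoid P n K s mu : P *m P = P -> \rank P = n -> Good P n K ->
  (s <= n)%N -> 0 <= mu -> (s = 0%N -> mu = 0) -> ((0 < s)%N -> mu < s%:R / 2) ->
  exists m (V : 'M[R]_(m,d)) (p : vec), V *m P = V /\ p *m P = p /\
  \rank V = (n - s)%N /\
  forall mu' k z, 0 <= mu' -> K k -> (mu' *: k + int_vec R z - p <= V)%MS ->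
    mu <= mu' /\ ((0 < s)%N -> mu < mu').
Proof.
move=> PP rP [_ [_ [_ hA]]] hs hmu h0 hpos.
case: (posnP s) => [s0|sp].
  exists d, P, 0; rewrite mul0mx rP s0 subn0; do 3 split => //.
  by move=> mu' k z h _ _; rewrite h0 //; split.
have [m [V [p [hV [hp [hr ha]]]]]] := hA s mu hs hmu (hpos sp).
exists m, V, p; do 3 split => //.
move=> mu' k z h hk hx.
have lt : mu < mu'.
  rewrite ltNge; apply/negP => le; apply: (ha mu' k z _ hk hx).
  by rewrite h le.
by split => //; apply: ltW.
Qed.

Lemma rebase n m (A : 'M[R]_(m,n)) r : \rank A = r ->
  exists B : 'M[R]_(r,n), \rank B = r /\
    (forall k (x : 'M[R]_(k,n)), (x <= B)%MS = (x <= A)%MS).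
Proof.
move=> <-; exists (row_base A); split; first by rewrite (eq_row_base A).1.
by move=> k x; rewrite ((eq_row_base A).2 k x).2.
Qed.

Lemma int_vecD n (z1 z2 : 'rV[int]_n) : int_vec R (z1 + z2) = int_vec R z1 + int_vec R z2.
Proof. by rewrite /int_vec map_mxD. Qed.

End Comb.
Lemma fin_contra (R : realType) (a b m m' l : R) : a <= m' * l -> b < m' * (1 - l) -> a + b = m -> m' <= m -> False.
Proof. move=> *; lra. Qed.
Lemma fin_contra' (R : realType) (a b m m' l : R) : a < m' * l -> b <= m' * (1 - l) -> a + b = m -> m' <= m -> False.
Proof. move=> *; lra. Qed.
Lemma aux1 (R : realType) (mu s sb : R) : 0 < sb -> mu < s/2 -> mu * sb < sb/2 * s.
Proof. move=> *; nra. Qed.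
Lemma aux0 (R : realType) (mu : R) : 0 <= mu -> mu < 0%:R/2 -> False.
Proof. move=> *; lra. Qed.
Arguments DS {R d}. Arguments RCov {R d}. Arguments Avoid {R d}. Arguments Good {R d}.

Section Comb2.
Variable R : realType.
Variable d : nat.
Local Notation vec := 'rV[R]_d.

Variables (P1 P2 : 'M[R]_d) (n1 n2 : nat) (K1 K2 K : vec -> Prop).
Hypotheses (P11 : P1 *m P1 = P1) (P22 : P2 *m P2 = P2) (P12 : P1 *m P2 = 0)
  (P21 : P2 *m P1 = 0) (r1 : \rank P1 = n1) (r2 : \rank P2 = n2)
  (I1 : intMx P1) (I2 : intMx P2) (G1 : Good P1 n1 K1) (G2 : Good P2 n2 K2)
  (eK : forall x, K x <-> DS K1 K2 x).

Lemma supp12 {m} {x : 'M[R]_(m,d)} : x *m P1 = x -> x *m P2 = 0.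
Proof. by move=> <-; rewrite -mulmxA P12 mulmx0. Qed.
Lemma supp21 {m} {x : 'M[R]_(m,d)} : x *m P2 = x -> x *m P1 = 0.
Proof. by move=> <-; rewrite -mulmxA P21 mulmx0. Qed.

Lemma comb_supp k : K k -> k *m (P1 + P2) = k.
Proof.
case: G1 => s1 _; case: G2 => s2 _.
move/eK => [lam [y1 [y2 [_ [h1 [h2 ->]]]]]].
rewrite mulmxDl -!scalemxAl !mulmxDr (supp12 (s1 _ h1)) (supp21 (s2 _ h2)).
by rewrite (s1 _ h1) (s2 _ h2) !addr0 add0r.
Qed.

Lemma comb_ne : exists k, K k.
Proof.
case: G1 => _ [[y1 h1] _]; case: G2 => _ [[y2 h2] _].
exists (1 *: y1 + (1 - 1) *: y2); apply/eK; exists 1, y1, y2; split; first by rewrite ler01 lexx.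
by split => //; split.
Qed.


Lemma comb_up i : (i <= n1 + n2)%N -> RCov (P1 + P2) (n1 + n2) K i (i%:R / 2).
Proof.
move=> hi m V p hV hp hr.
case: G1 => _ [_ [U1 _]]; case: G2 => _ [_ [U2 _]].
pose V1 := V *m P1.
have hV1 : V1 *m P1 = V1 by rewrite /V1 -mulmxA P11.
have r1le : (\rank V1 <= n1)%N by rewrite -r1 mxrankM_maxr.
pose W := (V :&: kermx P1)%MS.
have hWV : (W <= V)%MS := capmxSl _ _.
have hW1 : W *m P1 = 0 by apply/eqP; rewrite -sub_kermx capmxSr.
have hW : W *m P2 = W.
  case/submxP: (hWV) => D hD.
  have : W *m (P1 + P2) = W by rewrite hD -mulmxA hV.
  by rewrite mulmxDr hW1 add0r.
have rWle : (\rank W <= n2)%N by rewrite -r2 -{1}hW mxrankM_maxr.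
have hsum : (\rank V1 + \rank W = n1 + n2 - i)%N by rewrite -hr mxrank_mul_ker.
pose j := (n1 - \rank V1)%N.
have hj : (j <= i)%N by rewrite /j; lia.
have hp1 : (p *m P1) *m P1 = p *m P1 by rewrite -mulmxA P11.
have hrV1 : \rank V1 = (n1 - j)%N by rewrite /j subKn.
have [k1 [z1 [hk1 hx1]]] := U1 j (leq_subr _ _) _ V1 (p *m P1) hV1 hp1 hrV1.
case/submxP: hx1 => a ha.
pose v := a *m V.
have hij : (i - j <= n2)%N by rewrite /j; lia.
have hp2 : ((p + v) *m P2) *m P2 = (p + v) *m P2 by rewrite -mulmxA P22.
have hrW : \rank W = (n2 - (i - j))%N by rewrite /j; lia.
have [k2 [z2 [hk2 hx2]]] := U2 (i - j)%N hij _ W ((p + v) *m P2) hW hp2 hrW.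
case/submxP: hx2 => b hb.
pose lam : R := if i == 0%N then 1 else j%:R / i%:R.
have [hlam hs1 hs2] : [/\ 0 <= lam <= 1, i%:R / 2 * lam = j%:R / 2 &
                         i%:R / 2 * (1 - lam) = (i - j)%:R / 2].
  rewrite /lam; case: eqP => [i0|/eqP i0].
    have j0 : j = 0%N by move: hj; rewrite i0; lia.
    rewrite i0 j0 /=; split; [by rewrite ler01 lexx | by rewrite mulr1 | by rewrite subrr mulr0 mul0r].
  have ip : (0 < i)%N by rewrite lt0n.
  have iR : (i%:R : R) != 0 by rewrite pnatr_eq0 -lt0n.
  split.
  - rewrite divr_ge0 ?ler0n //= ler_pdivrMr ?ltr0n // mul1r ler_nat //.
  - by field.
  - by rewrite (natrB _ hj); field.
exists (lam *: k1 + (1 - lam) *: k2), (z1 + z2); split.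
  by apply/eK; exists lam, k1, k2.
rewrite scalerDr !scalerA hs1 hs2 int_vecD.
have hvP : v *m (P1 + P2) = v by rewrite /v -mulmxA hV.
have e1 : j%:R / 2 *: k1 + int_vec R z1 = v *m P1 + p *m P1.
  by apply/eqP; rewrite -subr_eq ha /v /V1 mulmxA.
have e2 : (i - j)%:R / 2 *: k2 + int_vec R z2 = b *m W + (p + v) *m P2.
  by apply/eqP; rewrite -subr_eq hb.
have -> : j%:R / 2 *: k1 + (i - j)%:R / 2 *: k2 + (int_vec R z1 + int_vec R z2) - p
   = (j%:R / 2 *: k1 + int_vec R z1) + ((i - j)%:R / 2 *: k2 + int_vec R z2) - p.
  by apply/rowP => c; rewrite !mxE; ring.
rewrite e1 e2 mulmxDl.
have -> : v *m P1 + p *m P1 + (b *m W + (p *m P2 + v *m P2)) - p = v + b *m W.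
  move: hp hvP; rewrite !mulmxDr.
  move: (p *m P1) (p *m P2) (v *m P1) (v *m P2) => a1 a2 a3 a4 <- <-.
  by apply/rowP => c; rewrite !mxE; ring.
apply: addmx_sub; first exact: submxMl.
exact: submx_trans (submxMl b W) hWV.
Qed.


Lemma comb_low s mu : (s <= n1 + n2)%N -> 0 <= mu -> mu < s%:R / 2 ->
  Avoid (P1 + P2) (n1 + n2) K s mu.
Proof.
move=> hs hmu hlt.
have sp : (0 < s)%N.
  rewrite lt0n; apply/eqP => s0; move: hlt; rewrite s0; exact: aux0.
pose s1 := minn s n1; pose s2 := (s - s1)%N.
have hs1 : (s1 <= n1)%N by rewrite /s1; lia.
have hs2 : (s2 <= n2)%N by rewrite /s2 /s1; lia.
have hss : (s1 + s2 = s)%N by rewrite /s2 /s1; lia.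
pose mu1 := mu * s1%:R / s%:R; pose mu2 := mu * s2%:R / s%:R.
have sR : (s%:R : R) != 0 by rewrite pnatr_eq0 -lt0n.
have sR' : (0 : R) < s%:R by rewrite ltr0n.
have hmu12 : mu1 + mu2 = mu.
  have -> : mu1 + mu2 = mu * (s1 + s2)%:R / s%:R by rewrite natrD /mu1 /mu2; field.
  by rewrite hss; field.
have blk : forall sb : nat, (0 <= mu * sb%:R / s%:R) /\ (sb = 0%N -> mu * sb%:R / s%:R = 0)
   /\ ((0 < sb)%N -> mu * sb%:R / s%:R < sb%:R / 2).
  move=> sb; split; first by rewrite divr_ge0 ?mulr_ge0 ?ler0n.
  split; first by move=> ->; rewrite mulr0 mul0r.
  move=> sbp; have sbR : (0 : R) < sb%:R by rewrite ltr0n.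
  rewrite ltr_pdivrMr //; exact: aux1.
have [b10 [b1z b1p]] := blk s1; have [b20 [b2z b2p]] := blk s2.
have [m1 [V1 [p1 [hV1 [hp1 [hr1 Q1]]]]]] := @block_avoid R d P1 n1 K1 s1 _ P11 r1 G1 hs1 b10 b1z b1p.
have [m2 [V2 [p2 [hV2 [hp2 [hr2 Q2]]]]]] := @block_avoid R d P2 n2 K2 s2 _ P22 r2 G2 hs2 b20 b2z b2p.
case: G1 => S1 _; case: G2 => S2 _.
exists (m1 + m2)%N, (col_mx V1 V2), (p1 + p2); split.
  by rewrite mul_col_mx !mulmxDr hV1 hV2 (supp12 hV1) (supp21 hV2) addr0 add0r.
split.
  by rewrite mulmxDl !mulmxDr hp1 hp2 (supp12 hp1) (supp21 hp2) addr0 add0r.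
split.
  rewrite -(addsmxE V1 V2).1 mxrank_disjoint_sum ?hr1 ?hr2; first by lia.
  pose C := (V1 :&: V2)%MS.
  have c1 : C *m P1 = C by case/submxP: (capmxSl V1 V2) => D hD; rewrite /C hD -mulmxA hV1.
  have c2 : C *m P2 = C by case/submxP: (capmxSr V1 V2) => D hD; rewrite /C hD -mulmxA hV2.
  by rewrite -/C -c1 -c2 -mulmxA P21 mulmx0.
move=> mu' k z /andP [h0 hle] hk.
move/eK: hk => [lam [y1 [y2 [/andP [l0 l1] [hy1 [hy2 ->]]]]]] hx.
case/submxP: hx => a ha.
rewrite -(hsubmxK a) mul_row_col in ha.
have [z1' hz1] := I1 z; have [z2' hz2] := I2 z.
have e1 : (mu' * lam) *: y1 + int_vec R z1' - p1 = lsubmx a *m V1.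
  have ha1 : (lsubmx a *m V1 + rsubmx a *m V2) *m P1 = lsubmx a *m V1.
    by rewrite mulmxDl -!mulmxA hV1 (supp21 hV2) mulmx0 addr0.
  have := congr1 (mulmx^~ P1) ha; rewrite /= ha1 => <-.
  rewrite mulmxBl !mulmxDl -scalemxAl mulmxDl -!scalemxAl (S1 _ hy1) (supp21 (S2 _ hy2)) hz1 hp1 (supp21 hp2).
  by rewrite scaler0 !addr0 scalerA.
have e2 : (mu' * (1 - lam)) *: y2 + int_vec R z2' - p2 = rsubmx a *m V2.
  have ha2 : (lsubmx a *m V1 + rsubmx a *m V2) *m P2 = rsubmx a *m V2.
    by rewrite mulmxDl -!mulmxA hV2 (supp12 hV1) mulmx0 add0r.
  have := congr1 (mulmx^~ P2) ha; rewrite /= ha2 => <-.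
  rewrite mulmxBl !mulmxDl -scalemxAl mulmxDl -!scalemxAl (S2 _ hy2) (supp12 (S1 _ hy1)) hz2 hp2 (supp12 hp1).
  by rewrite scaler0 !add0r scalerA.
have x1 : ((mu' * lam) *: y1 + int_vec R z1' - p1 <= V1)%MS by rewrite e1 submxMl.
have x2 : ((mu' * (1 - lam)) *: y2 + int_vec R z2' - p2 <= V2)%MS by rewrite e2 submxMl.
have g1 : 0 <= mu' * lam by rewrite mulr_ge0.
have g2 : 0 <= mu' * (1 - lam) by rewrite mulr_ge0 // subr_ge0.
have [q1 q1s] := Q1 (mu' * lam) y1 z1' g1 hy1 x1.
have [q2 q2s] := Q2 (mu' * (1 - lam)) y2 z2' g2 hy2 x2.
rewrite -/mu1 -/mu2 in q1 q1s q2 q2s.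
case: (posnP s1) => [s10|s1p].
  have s2p : (0 < s2)%N by move: sp; rewrite -hss s10 add0n.
  exact: (@fin_contra R _ _ _ _ _ q1 (q2s s2p) hmu12 hle).
exact: (@fin_contra' R _ _ _ _ _ (q1s s1p) q2 hmu12 hle).
Qed.

Lemma comb : Good (P1 + P2) (n1 + n2) K.
Proof.
split; first exact: comb_supp.
split; first exact: comb_ne.
split; first by move=> i hi; exact: comb_up.
by move=> s mu hs h0 hl; exact: comb_low.
Qed.

End Comb2.

Section Conv.
Variable R : realType.

Lemma conv_convex m n (v : 'I_m -> 'rV[R]_n) x y t :
  conv R v x -> conv R v y -> 0 <= t <= 1 -> conv R v (t *: x + (1 - t) *: y).
Proof.
move=> [l1 [h1 [s1 ->]]] [l2 [h2 [s2 ->]]] /andP [t0 t1].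
exists (fun j => t * l1 j + (1 - t) * l2 j); split; [|split].
- by move=> j; apply: addr_ge0; apply: mulr_ge0; rewrite // subr_ge0.
- by rewrite big_split /= -!mulr_sumr s1 s2 !mulr1 addrC subrK.
- rewrite !scaler_sumr -big_split /=; apply: eq_bigr => j _.
  by rewrite !scalerA -scalerDl.
Qed.

Lemma conv_map m n p (v : 'I_m -> 'rV[R]_n) (E : 'M[R]_(n,p)) (w : 'I_m -> 'rV[R]_p) :
  (forall t, w t = v t *m E) ->
  forall x, conv R w x <-> exists y, conv R v y /\ x = y *m E.
Proof.
move=> hw x; split.
  move=> [l [h [s ->]]]; exists (\sum_j l j *: v j); split; first by exists l.
  by rewrite mulmx_suml; apply: eq_bigr => j _; rewrite hw scalemxAl.
move=> [y [[l [h [s ->]]] ->]]; exists l; do 2 split => //.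
by rewrite mulmx_suml; apply: eq_bigr => j _; rewrite hw scalemxAl.
Qed.

End Conv.

Section Base.
Variable R : realType.
Variable d : nat.
Variables (ls : seq nat) (U : 'rV[int]_d) (j : nat).
Local Notation o := (blk_off ls j).
Local Notation l := (blk_len ls j).
Hypothesis ho : (o + l <= d)%N.

Lemma sum_hit (F : 'I_l -> R) (c : nat) (k0 : 'I_l) : c = (o + k0)%N ->
  \sum_(k < l) F k * ((c == o + k)%N%:R) = F k0.
Proof.
move=> hc; rewrite (bigD1 k0) //= hc eqxx mulr1 big1 ?addr0 // => k ne.
rewrite eqn_add2l eq_sym; move: ne; rewrite -val_eqE => /negbTE ->.
by rewrite mulr0.
Qed.

Lemma sum_miss (F : 'I_l -> R) (c : nat) : ~~ (o <= c < o + l)%N ->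
  \sum_(k < l) F k * ((c == o + k)%N%:R) = 0.
Proof.
move=> hc; rewrite big1 // => k _.
have hk := ltn_ord k.
case: eqP => [e|_]; last by rewrite mulr0.
by move: hc; rewrite e; lia.
Qed.

Lemma hit_or_miss (c : nat) : (exists k0 : 'I_l, c = (o + k0)%N) \/ ~~ (o <= c < o + l)%N.
Proof.
case: (boolP (o <= c < o + l)%N) => h; last by right.
have hk : (c - o < l)%N by lia.
by left; exists (Ordinal hk) => /=; lia.
Qed.

Lemma xPr (x : 'rV[R]_d) (k : 'I_l) (hk : (o + k < d)%N) :
  (x *m Pr o l) 0 k = x 0 (Ordinal hk).
Proof.
rewrite mxE /Pr; under eq_bigr do rewrite mxE.
by rewrite (@sum_ind1 R _ (fun i => x 0 i) (o + k) (Ordinal hk)).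
Qed.

Lemma xPi (x : 'rV[R]_d) (c : 'I_d) :
  (x *m Pi o l) 0 c = if (o <= c < o + l)%N then x 0 c else 0.
Proof.
rewrite /Pi mulmxA mxE /Em; under eq_bigr do rewrite [Emm _ _ _ _ _ _]mxE.
case: (hit_or_miss c) => [[k0 e]|h].
  have hk : (o + k0 < d)%N by rewrite -e.
  rewrite (@sum_hit (fun k => (x *m Pr o l) 0 k) c k0 e) xPr.
  have -> : (o <= c < o + l)%N by rewrite e; have := ltn_ord k0; lia.
  by congr (x 0 _); apply: val_inj => /=.
by rewrite (@sum_miss (fun k => (x *m Pr o l) 0 k) c h) (negbTE h).
Qed.

Lemma transl_Pi : blk_transl R d ls U j *m Pi o l = blk_transl R d ls U j.
Proof.
apply/rowP => c; rewrite xPi !mxE /in_blk.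
by case: ifP => h; rewrite ?h.
Qed.

Lemma blk_vertE t : blk_vert R d ls j t = simplex_vert R l t *m Em o l.
Proof.
apply/rowP => c; rewrite !mxE /Em; under eq_bigr do rewrite !mxE.
case: (hit_or_miss c) => [[k0 e]|h].
  rewrite (@sum_hit (fun k => if (t == 0 :> nat) then -1 else ((k.+1 == t :> nat))%:R) c k0 e).
  have hin : in_blk ls j c by rewrite /in_blk e; have := ltn_ord k0; lia.
  rewrite hin; case: eqP => // t0.
  have -> : (c == (o + t.-1)%N :> nat) = (k0.+1 == t :> nat) by apply/idP/idP => /eqP h; apply/eqP; lia.
  done.
rewrite (@sum_miss (fun k => if (t == 0 :> nat) then -1 else ((k.+1 == t :> nat))%:R) c h).
have hin : in_blk ls j c = false by apply/negbTE.
rewrite hin; case: eqP => // t0.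
have ht := ltn_ord t.
case: eqP => // e; move: h; rewrite e; lia.
Qed.

Lemma conv_blk x : conv R (blk_vert R d ls j) x <->
   exists y, terminal_simplex R l y /\ x = y *m Em o l.
Proof. exact: conv_map blk_vertE x. Qed.

End Base.

Section Base2.
Variable R : realType.
Variable d : nat.
Variables (ls : seq nat) (U : 'rV[int]_d) (j : nat).
Local Notation o := (blk_off ls j).
Local Notation l := (blk_len ls j).
Hypothesis ho : (o + l <= d)%N.
Hypothesis H : forall n : nat, (n <= d)%N -> forall s : nat, (1 <= s <= n)%N ->
     is_covering_minimum R (terminal_simplex R n) s (s%:R / 2).
Hypothesis h0 : blk_piece R d ls U j 0.
Local Notation tr := (blk_transl R d ls U j).
Local Notation K := (blk_piece R d ls U j).

Lemma piece_E x : K x <-> exists y, terminal_simplex R l y /\ x = tr + y *m (@Em R d o l).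
Proof.
split.
  move=> [y [hy ->]]; have [y' [hy' ->]] := (@conv_blk R d ls j ho y).1 hy.
  by exists y'.
move=> [y [hy ->]]; exists (y *m (@Em R d o l)); split => //.
by apply/(@conv_blk R d ls j ho); exists y.
Qed.

Lemma EmPi : (@Em R d o l) *m (@Pi R d o l) = (@Em R d o l).
Proof. by rewrite /Pi mulmxA (@EmPr R d o l ho) mul1mx. Qed.

Lemma piece_supp k : K k -> k *m (@Pi R d o l) = k.
Proof.
move/piece_E => [y [_ ->]].
by rewrite mulmxDl (@transl_Pi R d ls U j ho) -mulmxA EmPi.
Qed.

Lemma piece_convex x y t : K x -> K y -> 0 <= t <= 1 -> K (t *: x + (1 - t) *: y).
Proof.
move=> [x1 [hx1 ->]] [y1 [hy1 ->]] ht.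
exists (t *: x1 + (1 - t) *: y1); split; first exact: conv_convex.
by apply/rowP => c; rewrite !mxE; ring.
Qed.

Lemma piece_scale mu mu' k : 0 <= mu' <= mu -> K k -> exists k2, K k2 /\ mu' *: k = mu *: k2.
Proof.
move=> /andP [h1 h2] hk.
have [m0|mp] := eqVneq mu 0.
  have e : mu' = 0 by apply/le_anti; rewrite h1 -m0 h2.
  by exists k; rewrite e m0.
exists ((mu' / mu) *: k + (1 - mu' / mu) *: 0); split.
  apply: piece_convex => //.
  have mpos : 0 < mu by rewrite lt_def mp (le_trans h1 h2).
  by rewrite divr_ge0 ?(le_trans h1 h2) //= ler_pdivrMr // mul1r.
by rewrite scaler0 addr0 scalerA mulrCA divff // mulr1.
Qed.

Lemma rank_Em m (B : 'M[R]_(m,l)) : \rank (B *m (@Em R d o l)) = \rank B.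
Proof.
apply/eqP; rewrite eqn_leq mxrankM_maxl /=.
by rewrite -{1}(mulmx1 B) -(@EmPr R d o l ho) mulmxA mxrankM_maxl.
Qed.

Lemma rank_supp m (V : 'M[R]_(m,d)) : V *m (@Pi R d o l) = V -> \rank (V *m (@Pr R d o l)) = \rank V.
Proof.
move=> hV; apply/eqP; rewrite eqn_leq mxrankM_maxl /=.
by rewrite -{1}hV /Pi mulmxA mxrankM_maxl.
Qed.

Lemma base_good : Good (@Pi R d o l) l K.
Proof.
have hld : (l <= d)%N by move: ho; lia.
split; first exact: piece_supp.
split; first by exists 0.
split.
  move=> i hi m V p hV hp hr.
  pose V' := V *m (@Pr R d o l).
  have hV' : V' *m (@Em R d o l) = V by rewrite /V' -mulmxA; exact: hV.
  have rV' : \rank V' = (l - i)%N by rewrite rank_supp.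
  case: (posnP i) => [i0|ip].
    exists 0, 0; split => //.
    rewrite scaler0 /int_vec map_mx0 add0r sub0r (((eqmx_opp p).2 _ V).1).
    have full : row_full V' by rewrite /row_full rV' i0 subn0.
    have : (p *m (@Pr R d o l) *m (@Em R d o l) <= V' *m (@Em R d o l))%MS.
      by apply: submxMr; apply: submx_full.
    rewrite hV' -mulmxA => h; rewrite -hp; exact: h.
  have hi' : (1 <= i <= l)%N by rewrite ip hi.
  have [_ [cov _]] := H _ hld i hi'.
  have [B [rB eB]] := @rebase R _ _ V' _ rV'.
  pose p' := (p - (i%:R/2) *: tr) *m (@Pr R d o l).
  have [x' [ax' [k' [z' [hk' ex']]]]] := cov p' B rB.
  exists (tr + k' *m (@Em R d o l)), (z' *m Emm int d o l); split.
    by apply/piece_E; exists k'.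
  have sub : ((x' - p') *m (@Em R d o l) <= V)%MS.
    by rewrite -hV'; apply: submxMr; rewrite -eB.
  have hq : p' *m (@Em R d o l) = p - (i%:R/2) *: tr.
    rewrite /p' -mulmxA; change ((p - i%:R / 2 *: tr) *m (@Pi R d o l) = p - i%:R / 2 *: tr).
    by rewrite mulmxBl hp -scalemxAl (@transl_Pi R d ls U j ho).
  suff -> : i%:R / 2 *: (tr + k' *m (@Em R d o l)) + int_vec R (z' *m Emm int d o l) - p
          = (x' - p') *m (@Em R d o l) by [].
  rewrite mulmxBl hq ex' mulmxDl -scalemxAl -int_Em.
  move: (k' *m (@Em R d o l)) (int_vec R z' *m (@Em R d o l)) => a b.
  by apply/rowP => c; rewrite !mxE; ring.
move=> s mu hs hmu hlt.
have sp : (0 < s)%N.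
  rewrite lt0n; apply/eqP => s0; move: hlt; rewrite s0; exact: aux0.
have hs' : (1 <= s <= l)%N by rewrite sp hs.
have [_ [_ minim]] := H _ hld s hs'.
have ncov : ~ covers R (terminal_simplex R l) s mu.
  by move=> c; have := minim mu hmu c; rewrite leNgt hlt.
have [p' ncov1] := not_all_ex_not _ _ ncov.
have [B' ncov2] := not_all_ex_not _ _ ncov1.
have [rB nex] := imply_to_and _ _ ncov2.
exists (l - s)%N, (B' *m (@Em R d o l)), (p' *m (@Em R d o l) + mu *: tr).
split; first by rewrite -mulmxA EmPi.
split; first by rewrite mulmxDl -mulmxA EmPi -scalemxAl (@transl_Pi R d ls U j ho).
split; first by rewrite rank_Em.
move=> mu' k z hm hk hx.
have [k2 [hk2 e2]] := @piece_scale mu mu' k hm hk.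
rewrite e2 in hx.
have [y2 [hy2 e3]] := (piece_E k2).1 hk2.
rewrite e3 in hx.
apply: nex; exists (mu *: y2 + int_vec R (z *m Prm int d o l)); split; last first.
  by exists y2, (z *m Prm int d o l).
have := submxMr (@Pr R d o l) hx.
rewrite -mulmxA (@EmPr R d o l ho) mulmx1.
suff -> : (mu *: (tr + y2 *m (@Em R d o l)) + int_vec R z - (p' *m (@Em R d o l) + mu *: tr)) *m (@Pr R d o l)
   = mu *: y2 + int_vec R (z *m Prm int d o l) - p' by [].
rewrite -int_Pr !mulmxBl !mulmxDl -!scalemxAl mulmxDl -!mulmxA (@EmPr R d o l ho) !mulmx1.
move: (tr *m (@Pr R d o l)) (int_vec R z *m (@Pr R d o l)) => a b.
by apply/rowP => c; rewrite !mxE; ring.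
Qed.

End Base2.

Section Ind.
Variable R : realType.
Variable d : nat.
Variables (ls : seq nat) (U : 'rV[int]_d).
Local Notation P := (blk_piece R d ls U).
Local Notation D m := (direct_sum R m P).

Lemma ds_one x : D 1 x <-> P 0 x.
Proof.
split.
  move=> [l [y [_ [hs [hy ->]]]]]; rewrite big_ord1 in hs.
  by rewrite big_ord1 hs scale1r; exact: (hy ord0).
move=> hx; exists (fun _ => 1), (fun _ => x).
split; first by move=> _; exact: ler01.
split; first by rewrite big_ord1.
split; first by move=> k; rewrite (ord1 k).
by rewrite big_ord1 scale1r.
Qed.

Lemma ds_step m : (exists a, D m a) -> forall x, D m.+1 x <-> DS (D m) (P m) x.
Proof.
move=> [a0 ha0] x; split.
  move=> [l [y [hl [hs [hy ->]]]]].
  rewrite big_ord_recr /= in hs.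
  rewrite big_ord_recr /=.
  set lam := \sum_(i < m) l (widen_ord (leqnSn m) i) in hs *.
  have lam0 : 0 <= lam by apply: sumr_ge0 => i _.
  have lmax : l ord_max = 1 - lam by rewrite -hs addrAC subrr add0r.
  have [l0|lp] := eqVneq lam 0.
    have hz : forall i : 'I_m, l (widen_ord (leqnSn m) i) = 0.
      by move=> i; apply: (@psumr_eq0P _ _ xpredT (fun i => l (widen_ord (leqnSn m) i)) _ l0).
    exists 0, a0, (y ord_max); split; first by rewrite lexx ler01.
    split => //; split; first exact: (hy ord_max).
    rewrite big1 ?lmax ?l0 ?scale0r ?add0r ?subr0 // => i _.
    by rewrite hz scale0r.
  have lpos : 0 < lam by rewrite lt_def lp lam0.
  exists lam, (\sum_(i < m) (l (widen_ord (leqnSn m) i) / lam) *: y (widen_ord (leqnSn m) i)), (y ord_max).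
  split.
    by rewrite lam0 /= -subr_ge0 -lmax.
  split.
    exists (fun i => l (widen_ord (leqnSn m) i) / lam), (fun i => y (widen_ord (leqnSn m) i)).
    split; first by move=> i; rewrite divr_ge0.
    split; first by rewrite -mulr_suml -/lam divff.
    by split => // i; exact: (hy (widen_ord (leqnSn m) i)).
  split; first exact: (hy ord_max).
  rewrite -lmax scaler_sumr; congr (_ + _); apply: eq_bigr => i _.
  by rewrite scalerA mulrCA divff // mulr1.
move=> [lam [a [b [/andP [l0 l1] [[la [ya [hla [hsa [hya ->]]]]] [hb ->]]]]]].
pose L (i : 'I_m.+1) := if insub (val i) is Some i' then lam * la i' else 1 - lam.
pose Y (i : 'I_m.+1) := if insub (val i) is Some i' then ya i' else b.
exists L, Y; split.
  move=> i; rewrite /L; case: insubP => [i' _ _|_]; first by rewrite mulr_ge0.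
  by rewrite subr_ge0.
split.
  rewrite big_ord_recr /= /L.
  under eq_bigr do rewrite valK.
  by rewrite insubF ?ltnn // -mulr_sumr hsa mulr1 addrC subrK.
split.
  move=> i; rewrite /Y; case: insubP => [i' _ e|h]; first by rewrite -e; exact: hya.
  have e : nat_of_ord i = m by apply/eqP; rewrite eqn_leq -ltnS ltn_ord leqNgt; exact: h.
  by rewrite e.
rewrite big_ord_recr /= /L /Y.
under [X in _ = X + _]eq_bigr do rewrite valK.
rewrite insubF ?ltnn //; congr (_ + _).
by rewrite scaler_sumr; apply: eq_bigr => i _; rewrite scalerA.
Qed.

End Ind.

Lemma off_succ ls m : (m < size ls)%N -> blk_off ls m.+1 = (blk_off ls m + blk_len ls m)%N.
Proof. by move=> h; rewrite /blk_off (take_nth 0%N) // sumn_rcons. Qed.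

Lemma off_le ls m : (blk_off ls m <= sumn ls)%N.
Proof. by rewrite /blk_off -{2}(cat_take_drop m ls) sumn_cat leq_addr. Qed.

Section Ind2.
Variable R : realType.
Variable d : nat.
Variables (ls : seq nat) (U : 'rV[int]_d).
Hypothesis hsum : sumn ls = d.
Hypothesis H : forall n : nat, (n <= d)%N -> forall s : nat, (1 <= s <= n)%N ->
     is_covering_minimum R (terminal_simplex R n) s (s%:R / 2).
Hypothesis h0 : forall j, (j < size ls)%N -> blk_piece R d ls U j 0.

Lemma ho j : (j < size ls)%N -> (blk_off ls j + blk_len ls j <= d)%N.
Proof. by move=> h; rewrite -(@off_succ ls j h) -hsum off_le. Qed.

Lemma goodD m : (1 <= m <= size ls)%N ->
  Good (@Pi R d 0 (blk_off ls m)) (blk_off ls m) (direct_sum R m (blk_piece R d ls U)).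
Proof.
elim: m => [//|m IH] /andP [_ hm].
have hm' : (m < size ls)%N by [].
have G2 := @base_good R d ls U m (ho m hm') H (h0 m hm').
case: (posnP m) => [m0|mp].
  rewrite m0 in G2 hm' *.
  rewrite (@off_succ ls _ hm').
  have e0 : blk_off ls 0 = 0%N by rewrite /blk_off take0.
  rewrite e0 add0n; rewrite e0 in G2.
  exact: (@Good_ext R d _ _ _ _ (fun x => iff_sym (ds_one R d ls U x)) G2).
have G1 := IH (ltac:(by rewrite mp ltnW)).
rewrite (@off_succ ls _ hm').
have hle := ho m hm'.
have e : @Pi R d 0 (blk_off ls m + blk_len ls m) = Pi 0 (blk_off ls m) + Pi (blk_off ls m) (blk_len ls m).
  by rewrite Pi_split add0n.
rewrite e.
have o1 := @Pi_orth R d 0 (blk_off ls m) (blk_len ls m); rewrite add0n in o1.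
have o2 := @Pi_orth' R d 0 (blk_off ls m) (blk_len ls m); rewrite add0n in o2.
apply: (@comb R d _ _ _ _ _ _ _ _ _ o1 o2 _ _ (intP_Pi _ _ _ _) (intP_Pi _ _ _ _) G1 G2).
- by apply: Pi_idem; move: hle; lia.
- by apply: Pi_idem.
- by apply: rank_Pi; move: hle; lia.
- by apply: rank_Pi.
- case: G1 => _ [ne _]; exact: ds_step ne.
Qed.

End Ind2.

Theorem corollary4p4 (R : realType) (d : nat) :
  (forall n : nat, (n <= d)%N -> forall s : nat, (1 <= s <= n)%N ->
     is_covering_minimum R (terminal_simplex R n) s (s%:R / 2)) ->
  forall T : 'rV[R]_d -> Prop, terminal_polytope R d T ->
  forall i : nat, (1 <= i <= d)%N ->
    is_covering_minimum R T i (i%:R / 2).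
Proof.
move=> H T [ls [U [hpos [hsum [h0 hT]]]]] i /andP [i1 id].
have sz : (0 < size ls)%N.
  rewrite lt0n; apply/negP => /eqP/size0nil e; move: hsum; rewrite e /= => hd.
  by move: id; rewrite -hd leqn0 => /eqP i0; move: i1; rewrite i0.
have G := @goodD R d ls U hsum H h0 (size ls) (ltac:(by rewrite sz leqnn)).
have e1 : blk_off ls (size ls) = d by rewrite /blk_off take_size.
rewrite e1 Pi_full in G.
have [_ [_ [cov avo]]] := @Good_ext R d _ _ _ _ (fun x => iff_sym (hT x)) G.
split; first by rewrite divr_ge0 ?ler0n.
split.
  move=> p B rB.
  have [k [z [hk hx]]] := cov i id _ B p (mulmx1 B) (mulmx1 p) rB.
  exists (i%:R / 2 *: k + int_vec R z); split; first exact: hx.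
  by exists k, z.
move=> mu hmu hc.
rewrite leNgt; apply/negP => hlt.
have [m [V [p [_ [_ [rV ha]]]]]] := avo i mu id hmu hlt.
have [B [rB eB]] := @rebase R _ _ V _ rV.
have [x [ax [k [z [hk ex]]]]] := hc p B rB.
apply: (ha mu k z _ hk); first by rewrite hmu lexx.
by rewrite -eB -ex; exact: ax.
Qed.
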